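(* For every $n \geq 3$, letting $C_n$ denote the cycle of length $n$, ${\rm ML}^{\rm W}(C_n)=3$ if $n=3$, and ${\rm ML}^{\rm W}(C_n)=2n-6$ if $n\geq 4$.
   Context: A walk of a graph $G$ is a sequence of vertices $u_0u_1\dots u_p$ with $u_tu_{t+1}\in E(G)$ for all $t$ (vertices and edges may repeat); its length is $p$. For a walk $W$ of $G$, $G+W$ is the multigraph on $V(G)$ whose edge multiset consists of $E(G)$ together with each edge added as many times as $W$ traverses it. A multigraph is locally irregular if no two adjacent vertices have the same degree; a walk is irregularising if $G+W$ is locally irregular. ${\rm ML}^{\rm W}(G)$ denotes the minimum length of an irregularising walk of $G$ (a walk of length $0$ is allowed). *)

(* Defs.v *)
From mathcomp Require Import all_boot.
Set Implicit Arguments. Unset Strict Implicit. Unset Printing Implicit Defensive.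

(* A simple graph: vertex set a finType T, adjacency e : rel T
   (symmetric, irreflexive). *)

(* A walk u_0 u_1 ... u_p is represented by its start vertex u_0 and the
   sequence [:: u_1; ...; u_p]; it is a walk of G iff [path e u0 s]. *)
Definition is_walk (T : finType) (e : rel T) (u0 : T) (s : seq T) : bool :=
  path e u0 s.

Definition walk_length (T : finType) (u0 : T) (s : seq T) : nat := size s.

Definition walk_steps (T : finType) (u0 : T) (s : seq T) : seq (T * T) :=
  zip (u0 :: s) s.

Definition deg (T : finType) (e : rel T) (v : T) : nat := #|[pred u | e v u]|.

(* degree of v in the multigraph G + W: each traversal of an edge incident
   to v adds one to its degree (G has no loops, so u_t <> u_{t+1}). *)
Definition deg_plus (T : finType) (e : rel T) (u0 : T) (s : seq T) (v : T)
  : nat :=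
  deg e v + count (fun p : T * T => (p.1 == v) || (p.2 == v)) (walk_steps u0 s).

(* G + W locally irregular: adjacent vertices (adjacency in G + W equals
   adjacency in G) have different degrees. *)
Definition irregularising (T : finType) (e : rel T) (u0 : T) (s : seq T)
  : Prop :=
  is_walk e u0 s /\
  forall u v : T, e u v -> deg_plus e u0 s u <> deg_plus e u0 s v.

Definition MLW_is (T : finType) (e : rel T) (L : nat) : Prop :=
  (exists (u0 : T) (s : seq T), irregularising e u0 s /\ walk_length u0 s = L)
  /\ (forall (u0 : T) (s : seq T), irregularising e u0 s -> L <= walk_length u0 s).

Definition cycle_rel (n : nat) : rel 'I_n :=
  fun i j => (nat_of_ord j == i.+1 %% n) || (nat_of_ord i == j.+1 %% n).
Arguments cycle_rel n : clear implicits.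

(* Main.v *)
Require Import Defs.
From mathcomp Require Import all_boot.
From mathcomp Require Import zify.
Set Implicit Arguments. Unset Strict Implicit. Unset Printing Implicit Defensive.

Lemma cycle_relE n (x y : 'I_n) : cycle_rel n x y = (y == ordS x) || (x == ordS y).
Proof. by []. Qed.

Lemma ordSS_val n (j : 'I_n) : 1 < n ->
  val (ordS (ordS j)) = if j.+2 < n then j.+2 else j.+2 - n.
Proof.
move=> hn; have hj := ltn_ord j; rewrite /= .
case: (ltnP j.+1 n) => h1.
  rewrite (modn_small h1); case: (ltnP j.+2 n) => h2; first by rewrite modn_small.
  have e : j.+2 = n by lia.
  by rewrite e modnn subnn.
have e : j.+1 = n by lia.
rewrite e modnn modn_small // ifN; lia.
Qed.

Lemma ordS_neq n (j : 'I_n) : 1 < n -> (ordS j == j) = false.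
Proof.
move=> hn; apply/negbTE; rewrite -val_eqE /=; have hj := ltn_ord j.
case: (ltnP j.+1 n) => h1; first by rewrite modn_small //; lia.
have e : j.+1 = n by lia. by rewrite e modnn; lia.
Qed.

Lemma ordSS_neq n (j : 'I_n) : 2 < n -> (ordS (ordS j) == j) = false.
Proof.
move=> hn; apply/negbTE; rewrite -val_eqE ordSS_val; last lia.
have hj := ltn_ord j; case: ifP => h /=; lia.
Qed.

Lemma deg_cycle n (v : 'I_n) : 2 < n -> deg (cycle_rel n) v = 2.
Proof.
move=> hn; rewrite /deg.
have -> : #|[pred u | cycle_rel n v u]| = #|pred2 (ordS v) (ord_pred v)|.
  apply: eq_card => u; rewrite !inE cycle_relE; congr (_ || _).
  by rewrite eq_sym (can2_eq (@ordSK n) (@ord_predK n)).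
rewrite card2; suff h : (ordS v != ord_pred v) by rewrite h.
apply/negP => /eqP h.
have : ordS (ordS v) = v by rewrite h ord_predK.
by move/eqP; rewrite ordSS_neq.
Qed.

Definition ecode n (p : 'I_n * 'I_n) : 'I_n := if p.2 == ordS p.1 then p.1 else p.2.
Definition mc n (u0 : 'I_n) (s : seq 'I_n) (j : 'I_n) : nat :=
  count (fun p => ecode p == j) (walk_steps u0 s).
Definition wc n (u0 : 'I_n) (s : seq 'I_n) (v : 'I_n) : nat :=
  count (fun p : 'I_n * 'I_n => (p.1 == v) || (p.2 == v)) (walk_steps u0 s).

Lemma deg_plusE n (u0 : 'I_n) s v :
  deg_plus (cycle_rel n) u0 s v = deg (cycle_rel n) v + wc u0 s v.
Proof. by []. Qed.

Lemma mc_cons n (u0 x : 'I_n) s j : mc u0 (x :: s) j = (ecode (u0, x) == j) + mc x s j.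
Proof. by []. Qed.

Lemma wc_cons n (u0 x : 'I_n) s v :
  wc u0 (x :: s) v = ((u0 == v) || (x == v)) + wc x s v.
Proof. by []. Qed.

Lemma adj_neq n (x y : 'I_n) : 1 < n -> cycle_rel n x y -> (x == y) = false.
Proof.
move=> hn; rewrite cycle_relE => /orP [] /eqP ->; first by rewrite eq_sym ordS_neq.
by rewrite ordS_neq.
Qed.

Lemma inc_lemma n (x y j : 'I_n) : 1 < n -> cycle_rel n x y ->
  ((x == ordS j) || (y == ordS j)) = (ecode (x, y) == j) + (ecode (x, y) == ordS j) :> nat.
Proof.
move=> hn; rewrite cycle_relE /ecode /=.
case: ifP => [/eqP -> _ | _ /= /eqP ->]; rewrite (inj_eq (@ordS_inj n)).
  case: (x =P j) => [->|_]; first by rewrite orbT eq_sym ordS_neq.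
  by rewrite orbF.
case: (y =P j) => [->|_]; first by rewrite eq_sym ordS_neq.
by [].
Qed.

Lemma wc_m n (u0 : 'I_n) s j : 1 < n -> path (cycle_rel n) u0 s ->
  wc u0 s (ordS j) = mc u0 s j + mc u0 s (ordS j).
Proof.
move=> hn; elim: s u0 => [|x s IH] u0 //= /andP [hx hp].
rewrite wc_cons !mc_cons (IH x hp) (inc_lemma _ hn hx); lia.
Qed.

Lemma sum_eq1 n (c : 'I_n) : \sum_(j : 'I_n) (c == j) = 1.
Proof.
rewrite (bigD1 c) //= eqxx big1 // => j hj; by rewrite eq_sym (negbTE hj).
Qed.

Lemma sum_eq1' n (c : 'I_n) : \sum_(j : 'I_n) (j == c) = 1.
Proof.
rewrite (bigD1 c) //= eqxx big1 // => j hj; by rewrite (negbTE hj).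
Qed.

Lemma size_m n (u0 : 'I_n) s : size s = \sum_j mc u0 s j.
Proof.
elim: s u0 => [|x s IH] u0; first by rewrite big1.
under eq_bigr do rewrite mc_cons.
by rewrite big_split /= sum_eq1 -IH.
Qed.

Lemma wc_parity n (u0 : 'I_n) s v : 1 < n -> path (cycle_rel n) u0 s ->
  wc u0 s v + (u0 == v) + (last u0 s == v) = 2 * count_mem v (u0 :: s).
Proof.
move=> hn; elim: s u0 => [|x s IH] u0 /=; first by move=> _; rewrite /wc /=; lia.
move=> /andP [hx hp]; rewrite wc_cons.
have := IH x hp; rewrite /= => IH'.
have h : ((u0 == v) && (x == v)) = false.
  apply/negbTE/negP => /andP [/eqP h1 /eqP h2].
  by move: (adj_neq hn hx); rewrite h1 h2 eqxx.
lia.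
Qed.

Lemma odd_wc n (u0 : 'I_n) s v : 1 < n -> path (cycle_rel n) u0 s ->
  odd (wc u0 s v) <= (u0 == v) + (last u0 s == v).
Proof. move=> hn hp; have := wc_parity v hn hp; lia. Qed.

Definition bnd n (m : 'I_n -> nat) := \sum_j ((m j == 0) && (m (ordS j) != 0)).

Lemma sum_split2 n (F : 'I_n -> nat) a b : b != a ->
  \sum_j F j = F a + F b + \sum_(j | (j != a) && (j != b)) F j.
Proof. by move=> hab; rewrite (bigD1 a) //= (bigD1 b) //= addnA. Qed.

Lemma ordS_eq n (i e : 'I_n) : (e == ordS i) = (i == ord_pred e).
Proof. by rewrite eq_sym (can2_eq (@ordSK n) (@ord_predK n)). Qed.

Lemma pred_neq n (e : 'I_n) : 1 < n -> (ord_pred e != e).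
Proof.
move=> hn; apply/negP => /eqP h.
have : ordS (ord_pred e) = ordS e by rewrite h.
by rewrite ord_predK => /eqP; rewrite eq_sym ordS_neq.
Qed.

Lemma bnd_upd n (m : 'I_n -> nat) e : 1 < n ->
  (0 < m e) || (0 < m (ordS e)) || (0 < m (ord_pred e)) ->
  bnd (fun j => (e == j) + m j) <= bnd m.
Proof.
move=> hn hpos; rewrite /bnd !(sum_split2 _ (pred_neq e hn)).
have -> : \sum_(j | (j != e) && (j != ord_pred e))
     ((((e == j) + m j) == 0) && (((e == ordS j) + m (ordS j)) != 0)) =
   \sum_(j | (j != e) && (j != ord_pred e)) ((m j == 0) && (m (ordS j) != 0)).
  apply: eq_bigr => j /andP [h1 h2].
  by rewrite (eq_sym e j) (negbTE h1) ordS_eq (negbTE h2).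
rewrite eqxx ord_predK eqxx (eq_sym e (ord_pred e)) (negbTE (pred_neq e hn)).
rewrite ordS_eq (eq_sym e (ord_pred e)) (negbTE (pred_neq e hn)).
lia.
Qed.

Lemma bnd_ext n (m1 m2 : 'I_n -> nat) : (forall j, m1 j = m2 j) -> bnd m1 = bnd m2.
Proof. by move=> h; apply: eq_bigr => j _; rewrite !h. Qed.

Lemma ecode_inc n (x y : 'I_n) : cycle_rel n x y ->
  ((x == ecode (x, y)) || (x == ordS (ecode (x, y)))) &&
  ((y == ecode (x, y)) || (y == ordS (ecode (x, y)))).
Proof.
rewrite cycle_relE /ecode /=; case: ifP => [/eqP -> _| _ /= /eqP ->].
  by rewrite !eqxx orbT.
by rewrite !eqxx orbT.
Qed.

Lemma bnd_walk n (u0 : 'I_n) s : 2 < n -> path (cycle_rel n) u0 s -> s != [::] ->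
  bnd (mc u0 s) <= 1 /\
  exists c, (0 < mc u0 s c) && ((u0 == c) || (u0 == ordS c)).
Proof.
move=> hn; have hn1 : 1 < n by lia.
elim: s u0 => [|x s IH] u0 // /= /andP [hx hp] _.
set e := ecode (u0, x).
have /andP [hu hxe] := ecode_inc hx.
split; last first.
  by exists e; rewrite mc_cons eqxx hu.
rewrite (bnd_ext (m2 := fun j => (e == j) + mc x s j)); last by move=> j; rewrite mc_cons.
case: s IH hp => [|y s] IH hp.
  rewrite /bnd; apply: (@leq_trans (\sum_j (j == ord_pred e))).
    apply: leq_sum => j _; rewrite /mc /= -ordS_eq !addn0; case: (e == ordS j); case: (e == j) => //.
  by rewrite sum_eq1'.
have [hb [c /andP [hc hxc]]] := IH x hp isT.
apply: leq_trans hb; apply: bnd_upd => //.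
case/orP: hxc => /eqP hxc; case/orP: hxe => /eqP hxe.
- have ec : ecode (u0, x) = c by rewrite -hxe.
  by rewrite /e ec hc.
- have ec : ordS (ecode (u0, x)) = c by rewrite -hxe.
  by rewrite /e ec hc orbT.
- have ec : ord_pred (ecode (u0, x)) = c by rewrite -hxe hxc ordSK.
  by rewrite /e ec hc !orbT.
- have ec : ecode (u0, x) = c by apply: ordS_inj; rewrite -hxe.
  by rewrite /e ec hc.
Qed.

Lemma sumS n (F : 'I_n -> nat) : \sum_j F (ordS j) = \sum_j F j.
Proof. by rewrite [RHS](reindex_inj (@ordS_inj n)). Qed.

Lemma sumSS n (F : 'I_n -> nat) : \sum_j F (ordS (ordS j)) = \sum_j F j.
Proof. by rewrite (sumS (fun j => F (ordS j))) sumS. Qed.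

Lemma zeros_le2 n (m : 'I_n -> nat) : bnd m <= 1 ->
  (forall j, m j != m (ordS (ordS j))) -> \sum_j (m j == 0) <= 2.
Proof.
move=> hb hA.
apply: (@leq_trans (\sum_j (((m j == 0) && (m (ordS j) != 0)) +
                             ((m (ordS j) == 0) && (m (ordS (ordS j)) != 0))))).
  apply: leq_sum => j _; have := hA j; lia.
rewrite big_split /= (sumS (fun j => ((m j == 0) && (m (ordS j) != 0)) : nat)).
rewrite /bnd in hb; exact: (leq_add hb hb).
Qed.

Lemma lb_core n (m : 'I_n -> nat) :
  (forall j, m j != m (ordS (ordS j))) ->
  \sum_j (m j == 0) <= 2 ->
  \sum_j (odd (m j) != odd (m (ordS (ordS j)))) <= 4 ->
  4 * n <= 2 * \sum_j m j + 12.
Proof.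
move=> hA hZ hM.
have h : \sum_(j : 'I_n) 4 <= \sum_j (m j + m (ordS (ordS j)) + ((m j == 0) + (m j == 0))
   + ((m (ordS (ordS j)) == 0) + (m (ordS (ordS j)) == 0))
   + (odd (m j) != odd (m (ordS (ordS j))))).
  apply: leq_sum => j _; have := hA j; lia.
rewrite !big_split /= (sumSS m) (sumSS (fun j => (m j == 0) : nat)) in h.
rewrite sum_nat_const card_ord in h.
set S := \sum_j m j in h *; set Z := \sum_j (m j == 0 : nat) in h hZ; set M := \sum_j (odd (m j) != odd (m (ordS (ordS j))) : nat) in h hM. lia.
Qed.

Lemma irr_A n (u0 : 'I_n) s : 2 < n -> irregularising (cycle_rel n) u0 s ->
  forall j, mc u0 s j != mc u0 s (ordS (ordS j)).
Proof.
move=> hn [hp hirr]; have hn1 : 1 < n by lia.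
move=> j; apply/eqP => heq.
apply: (hirr (ordS j) (ordS (ordS j))); first by rewrite cycle_relE eqxx.
rewrite !deg_plusE !deg_cycle // (wc_m j hn1 hp) (wc_m (ordS j) hn1 hp) heq.
lia.
Qed.

Lemma lower_bound n (u0 : 'I_n) s : 2 < n -> irregularising (cycle_rel n) u0 s ->
  2 * n - 6 <= size s.
Proof.
move=> hn hirr; have hA := irr_A hn hirr; case: hirr => hp _.
have hn1 : 1 < n by lia.
have hs : s != [::].
  apply/negP => /eqP hs0; subst s.
  have j0 : 'I_n := Ordinal (ltnW (ltnW hn)).
  by move: (hA j0); rewrite /mc /=.
have [hb _] := bnd_walk hn hp hs.
have hZ := zeros_le2 hb hA.
have hM : \sum_j (odd (mc u0 s j) != odd (mc u0 s (ordS (ordS j)))) <= 4.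
  apply: (@leq_trans (\sum_j (odd (wc u0 s (ordS j)) + odd (wc u0 s (ordS (ordS j)))))).
    apply: leq_sum => j _; rewrite (wc_m j hn1 hp) (wc_m (ordS j) hn1 hp); lia.
  rewrite big_split /= (sumS (fun j => odd (wc u0 s j) : nat)).
  rewrite (sumSS (fun j => odd (wc u0 s j) : nat)).
  have : \sum_v odd (wc u0 s v) <= \sum_v ((u0 == v) + (last u0 s == v)).
    by apply: leq_sum => v _; apply: odd_wc.
  rewrite big_split /= !sum_eq1; lia.
have := lb_core hA hZ hM; rewrite -size_m; set k := size s; lia.
Qed.

Lemma ordSSS3 (j : 'I_3) : ordS (ordS (ordS j)) = j.
Proof. apply: val_inj => /=; have := ltn_ord j; lia. Qed.

Lemma lower3 (u0 : 'I_3) s : irregularising (cycle_rel 3) u0 s -> 3 <= size s.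
Proof.
move=> hirr; have hA := irr_A (isT : 2 < 3) hirr.
have h : \sum_(j : 'I_3) 3 <= \sum_j (mc u0 s j + mc u0 s (ordS j) + mc u0 s (ordS (ordS j))).
  apply: leq_sum => j _; have := hA j; have := hA (ordS j); have := hA (ordS (ordS j)).
  rewrite !ordSSS3; lia.
rewrite !big_split /= (sumS (mc u0 s)) (sumSS (mc u0 s)) sum_nat_const card_ord -size_m in h.
set k := size s in h *; lia.
Qed.

Definition nadj (x y : nat) := (y == x.+1) || (x == y.+1).
Definition posn n (hn : 0 < n) (x : nat) : 'I_n := Ordinal (ltn_pmod x hn).
Definition Mn (x0 : nat) (s : seq nat) (j : nat) : nat :=
  count (fun p : nat * nat => minn p.1 p.2 == j) (zip (x0 :: s) s).

Lemma Mn_nil x0 j : Mn x0 [::] j = 0.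
Proof. by []. Qed.

Lemma Mn_cons x0 x s j : Mn x0 (x :: s) j = (minn x0 x == j) + Mn x s j.
Proof. by []. Qed.

Lemma Mn_cat x0 s1 s2 j : Mn x0 (s1 ++ s2) j = Mn x0 s1 j + Mn (last x0 s1) s2 j.
Proof.
elim: s1 x0 => [|x s1 IH] x0 /=; first by rewrite Mn_nil.
by rewrite !Mn_cons IH addnA.
Qed.

Lemma modS_aux n x : (x %% n).+1 %% n = x.+1 %% n.
Proof. by rewrite -[(x %% n).+1]addn1 -[x.+1]addn1 modnDml. Qed.

Lemma posn_adj n (hn : 0 < n) x y : 2 < n -> nadj x y ->
  cycle_rel n (posn hn x) (posn hn y) /\ ecode (posn hn x, posn hn y) = posn hn (minn x y).
Proof.
move=> h2; case/orP => /eqP ->.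
  have e1 : posn hn x.+1 == ordS (posn hn x) by rewrite -val_eqE /= modS_aux.
  split; first by rewrite cycle_relE e1.
  rewrite /ecode /= e1; apply: val_inj => /=; congr (_ %% n); lia.
have e1 : posn hn y.+1 == ordS (posn hn y) by rewrite -val_eqE /= modS_aux.
split; first by rewrite cycle_relE e1 orbT.
have e2 : (posn hn y == ordS (posn hn y.+1)) = false.
  rewrite -val_eqE /= modS_aux; apply/negbTE.
  rewrite -[y.+2]addn2 -[y in y %% n == _]addn0 eq_sym.
  by rewrite eqn_modDl mod0n modn_small.
rewrite /ecode /= e2; apply: val_inj => /=; congr (_ %% n); lia.
Qed.

Lemma map_walk n (hn : 0 < n) x0 s : 2 < n -> path nadj x0 s ->
  path (cycle_rel n) (posn hn x0) (map (posn hn) s).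
Proof.
move=> h2; elim: s x0 => [|x s IH] x0 //= /andP [ha hp].
by rewrite (posn_adj hn h2 ha).1 IH.
Qed.

Lemma mc_map n (hn : 0 < n) x0 s (j : 'I_n) : 2 < n -> path nadj x0 s ->
  all (fun x => x <= n) (x0 :: s) ->
  mc (posn hn x0) (map (posn hn) s) j = Mn x0 s j.
Proof.
move=> h2; elim: s x0 => [|x s IH] x0 //= /andP [ha hp] /and3P [h0 h1 hal].
rewrite mc_cons Mn_cons (posn_adj hn h2 ha).2 IH //=; last by rewrite h1.
congr (_ + _); rewrite -val_eqE /= modn_small //.
move: ha; rewrite /nadj; lia.
Qed.

Lemma irr_from_m n (u0 : 'I_n) s : 2 < n -> path (cycle_rel n) u0 s ->
  (forall j, mc u0 s j != mc u0 s (ordS (ordS j))) -> irregularising (cycle_rel n) u0 s.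
Proof.
move=> h2 hp hA; have hn1 : 1 < n by lia.
split => // u v; rewrite cycle_relE => /orP [] /eqP ->.
  have [j ->] : exists j, u = ordS j by exists (ord_pred u); rewrite ord_predK.
  rewrite !deg_plusE !deg_cycle // (wc_m j hn1 hp) (wc_m (ordS j) hn1 hp).
  by have := hA j; lia.
have [j ->] : exists j, v = ordS j by exists (ord_pred v); rewrite ord_predK.
rewrite !deg_plusE !deg_cycle // (wc_m j hn1 hp) (wc_m (ordS j) hn1 hp).
by have := hA j; lia.
Qed.

Lemma upper_nat n x0 s : 2 < n -> path nadj x0 s -> all (fun x => x <= n) (x0 :: s) ->
  (forall j, j < n -> Mn x0 s j != Mn x0 s (if j.+2 < n then j.+2 else j.+2 - n)) ->
  exists u0 s', irregularising (cycle_rel n) u0 s' /\ size s' = size s.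
Proof.
move=> h2 hp hal hM; have hn : 0 < n by lia.
exists (posn hn x0), (map (posn hn) s); split; last by rewrite size_map.
apply: irr_from_m => //; first exact: map_walk.
move=> j; rewrite !mc_map // ordSS_val; last lia.
exact: hM.
Qed.

Definition gv (k : nat) : nat := 1 + 2 * (k %% 4 < 2).

Fixpoint blocks (p t : nat) : seq nat :=
  if t is t'.+1 then
    [:: p.+1; p.+2; p.+1; p; p.+1; p.+2; p.+3; p.+4] ++ blocks (p + 4) t'
  else [::].

Lemma size_blocks p t : size (blocks p t) = 8 * t.
Proof. elim: t p => [|t IH] p //=; rewrite IH; lia. Qed.

Lemma last_blocks p t : last p (blocks p t) = p + 4 * t.
Proof.
elim: t p => [|t IH] p /=; first lia.
have -> : p.+4 = p + 4 by lia.
rewrite IH; lia.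
Qed.

Lemma path_blocks p t : path nadj p (blocks p t).
Proof.
elim: t p => [|t IH] p //=.
rewrite /nadj !eqxx /= !orbT /=.
have -> : p.+4 = p + 4 by lia.
exact: IH.
Qed.

Lemma all_blocks p t N : p + 4 * t <= N -> all (fun x => x <= N) (blocks p t).
Proof.
elim: t p => [|t IH] p //= h.
rewrite IH; last lia.
lia.
Qed.




Lemma gv4 k : gv k.+4 = gv k.
Proof. by rewrite /gv -addn4 modnDr. Qed.

Lemma Mn_lt x0 s j : all (fun x => j < x) (x0 :: s) -> Mn x0 s j = 0.
Proof.
elim: s x0 => [|x s IH] x0 //= /and3P [h0 h1 hal].
rewrite Mn_cons IH /=; last by rewrite h1.
have : j < minn x0 x by rewrite leq_min h0.
by case: eqP => // ->; rewrite ltnn.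
Qed.

Lemma all_blocks_ge p t N : N <= p -> all (fun x => N <= x) (blocks p t).
Proof.
elim: t p => [|t IH] p //= h.
rewrite IH; last by rewrite (leq_trans h) // leq_addr.
by rewrite (leqW (leqW (leqW (leqW h)))) (leqW (leqW (leqW h))) (leqW (leqW h)) (leqW h) h.
Qed.

Lemma minnS1 x : minn x x.+1 = x. Proof. by rewrite (minn_idPl (leqnSn x)). Qed.
Lemma minnS2 x : minn x.+1 x = x. Proof. by rewrite (minn_idPr (leqnSn x)). Qed.

Lemma eq0 p d : (p == p + d) = (d == 0).
Proof. by rewrite -[p in (p == _)]addn0 eqn_add2l eq_sym. Qed.
Lemma eq1 p d : (p.+1 == p + d) = (d == 1).
Proof. by rewrite -[p.+1]addn1 eqn_add2l eq_sym. Qed.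
Lemma eq2 p d : (p.+2 == p + d) = (d == 2).
Proof. by rewrite -[p.+2]addn2 eqn_add2l eq_sym. Qed.
Lemma eq3 p d : (p.+3 == p + d) = (d == 3).
Proof. by rewrite -[p.+3]addn3 eqn_add2l eq_sym. Qed.

Lemma Mn_blocks_d p t d : Mn p (blocks p t) (p + d) = if d < 4 * t then gv d else 0.
Proof.
elim: t p d => [|t IH] p d; first by rewrite muln0 Mn_nil.
change (Mn p ([:: p.+1; p.+2; p.+1; p; p.+1; p.+2; p.+3; p.+4] ++ blocks (p + 4) t) (p + d)
  = if d < 4 * t.+1 then gv d else 0).
rewrite Mn_cat !Mn_cons Mn_nil !minnS1 !minnS2 /=.
rewrite !eq0 !eq1 !eq2 !eq3 -addn4.
have hlt : forall d', d' < 4 -> Mn (p + 4) (blocks (p + 4) t) (p + d') = 0.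
  move=> d' hd; apply: Mn_lt; rewrite /= all_blocks_ge ?andbT.
    by rewrite ltn_add2l.
  by rewrite ltn_add2l.
rewrite mulnS.
case: d => [|[|[|[|d]]]] /=; try (rewrite hlt //; rewrite ?ifT //; by rewrite ltn_addr).
rewrite (_ : p + d.+4 = (p + 4) + d); last by rewrite -addnA add4n.
rewrite IH gv4.
by rewrite -[d.+4]add4n ltn_add2l.
Qed.

Lemma Mn_blocks p t j :
  Mn p (blocks p t) j = if (p <= j) && (j < p + 4 * t) then gv (j - p) else 0.
Proof.
case: (ltnP j p) => h.
  by rewrite Mn_lt //= h all_blocks_ge.
rewrite -{1}(subnKC h) Mn_blocks_d /=.
by have -> : (j < p + 4 * t) = (j - p < 4 * t) by rewrite -{1}(subnKC h) ltn_add2l.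
Qed.


Lemma Mn_ge x0 s b j : path nadj x0 s -> all (fun x => x <= b) (x0 :: s) -> b <= j ->
  Mn x0 s j = 0.
Proof.
elim: s x0 => [|x s IH] x0 //= /andP [ha hp] /and3P [h0 h1 hal] hj.
rewrite Mn_cons IH //=; last by rewrite h1.
move: ha; rewrite /nadj; lia.
Qed.



Lemma check_abc n (M : nat -> nat) : 3 < n ->
  (forall j, j < 2 -> M j = 0) -> (forall j, 2 <= j < n -> 0 < M j) ->
  (forall j, 2 <= j -> j.+2 < n -> M j != M j.+2) ->
  forall j, j < n -> M j != M (if j.+2 < n then j.+2 else j.+2 - n).
Proof.
move=> hn ha hb hc j hj; case: ifP => hk.
  case: (ltnP j 2) => h2; last exact: hc.
  rewrite ha // neq_ltn hb //; lia.
have h1 : j.+2 - n < 2 by lia.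
rewrite (ha _ h1) neq_ltn hb ?orbT //; lia.
Qed.



Lemma gv_pos k : 0 < gv k. Proof. rewrite /gv; lia. Qed.


Lemma gv_S2 k : gv k.+2 != gv k. Proof. rewrite /gv; lia. Qed.



Lemma fam1 n t : n = 4 * t + 5 ->
  exists u0 s, irregularising (cycle_rel n) u0 s /\ size s = 2 * n - 6.
Proof.
move=> hn.
have hp : path nadj 3 [:: 2; 3; 4; 5] by [].
have hal : all (fun x => x <= 5) [:: 3; 2; 3; 4; 5] by [].
have [|||| u0 [s' [hi hs]]] := @upper_nat n 3 ([:: 2; 3; 4; 5] ++ blocks 5 t).
- lia.
- by rewrite cat_path /= path_blocks.
- rewrite -cat_cons all_cat all_blocks /=; lia.
- apply: check_abc; first lia.
  + by move=> [|[|]] // _; rewrite Mn_cat Mn_blocks.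
  + move=> j /andP [h2 hjn]; case: (ltnP j 5) => hj5.
      case: j h2 hj5 {hjn} => [|[|[|[|[|j]]]]] // _ _; by rewrite Mn_cat Mn_blocks.
    rewrite Mn_cat (Mn_ge hp hal) // Mn_blocks; case: ifP => /= h; [exact: gv_pos | lia].
  + move=> j h2 hj2; case: (ltnP j 5) => hj5.
      case: j h2 hj5 hj2 => [|[|[|[|[|j]]]]] // _ _ hj2; rewrite !Mn_cat !Mn_blocks /= /Mn /=;
        repeat (let h := fresh "h" in case: ifP => h); rewrite /gv; lia.
    rewrite !Mn_cat !(Mn_ge hp hal) //; last lia.
    rewrite !Mn_blocks /= !ifT; [|lia|lia].
    have -> : j.+2 - 5 = (j - 5).+2 by lia.
    by rewrite /= !add0n gv_S2.
- exists u0, s'; rewrite hs size_cat size_blocks /=; split => //; lia.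
Qed.



Lemma fam2 n t : n = 4 * t + 6 ->
  exists u0 s, irregularising (cycle_rel n) u0 s /\ size s = 2 * n - 6.
Proof.
move=> hn.
have hp : path nadj 4 [:: 3; 2; 3; 4; 5; 6] by [].
have hal : all (fun x => x <= 6) [:: 4; 3; 2; 3; 4; 5; 6] by [].
have [|||| u0 [s' [hi hs]]] := @upper_nat n 4 ([:: 3; 2; 3; 4; 5; 6] ++ blocks 6 t).
- lia.
- by rewrite cat_path /= path_blocks.
- rewrite -cat_cons all_cat all_blocks /=; lia.
- apply: check_abc; first lia.
  + by move=> [|[|]] // _; rewrite Mn_cat Mn_blocks.
  + move=> j /andP [h2 hjn]; case: (ltnP j 6) => hj5.
      case: j h2 hj5 {hjn} => [|[|[|[|[|[|j]]]]]] // _ _; by rewrite Mn_cat Mn_blocks.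
    rewrite Mn_cat (Mn_ge hp hal) // Mn_blocks; case: ifP => /= h; [exact: gv_pos | lia].
  + move=> j h2 hj2; case: (ltnP j 6) => hj5.
      case: j h2 hj5 hj2 => [|[|[|[|[|[|j]]]]]] // _ _ hj2; rewrite !Mn_cat !Mn_blocks /= /Mn /=;
        repeat (let h := fresh "h" in case: ifP => h); rewrite /gv; lia.
    rewrite !Mn_cat !(Mn_ge hp hal) //; last lia.
    rewrite !Mn_blocks /= !ifT; [|lia|lia].
    have -> : j.+2 - 6 = (j - 6).+2 by lia.
    by rewrite /= !add0n gv_S2.
- exists u0, s'; rewrite hs size_cat size_blocks /=; split => //; lia.
Qed.



Lemma gv_ne2 k : gv k != 2. Proof. by rewrite /gv; case: (_ < 2). Qed.
Lemma gv0 : gv 0 = 3. Proof. by []. Qed.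
Lemma gv1 : gv 1 = 3. Proof. by []. Qed.

Lemma sfx t j : Mn (6 + 4 * t) [:: 4 * t + 7; 4 * t + 6] j = (4 * t + 6 == j) + (4 * t + 6 == j).
Proof.
have e1 : minn (6 + 4 * t) (4 * t + 7) = 4 * t + 6 by lia.
have e2 : minn (4 * t + 7) (4 * t + 6) = 4 * t + 6 by lia.
by rewrite !Mn_cons Mn_nil e1 e2 addn0.
Qed.

Lemma fam3 n t : n = 4 * t + 7 ->
  exists u0 s, irregularising (cycle_rel n) u0 s /\ size s = 2 * n - 6.
Proof.
move=> hn.
have hp : path nadj 4 [:: 3; 2; 3; 4; 5; 6] by [].
have hal : all (fun x => x <= 6) [:: 4; 3; 2; 3; 4; 5; 6] by [].
have [|||| u0 [s' [hi hs]]] :=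
  @upper_nat n 4 (([:: 3; 2; 3; 4; 5; 6] ++ blocks 6 t) ++ [:: 4 * t + 7; 4 * t + 6]).
- lia.
- rewrite cat_path cat_path /= path_blocks /= ?last_cat /= last_blocks /nadj /=.
  lia.
- rewrite -cat_cons all_cat -cat_cons all_cat all_blocks /=; lia.
- apply: check_abc; first lia.
  + move=> [|[|]] // _; rewrite !Mn_cat last_cat /= last_blocks sfx Mn_blocks /= /Mn /=; lia.
  + move=> j /andP [h2 hjn]; rewrite !Mn_cat last_cat /= last_blocks sfx.
    case: (ltnP j 6) => hj5.
      case: j h2 hj5 {hjn} => [|[|[|[|[|[|j]]]]]] // _ _; rewrite Mn_blocks /= /Mn /=; lia.
    rewrite (Mn_ge hp hal) // Mn_blocks.
    case: ifP => /= h; [have := gv_pos (j - 6); lia | lia].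
  + move=> j h2 hj2; rewrite !Mn_cat last_cat /= last_blocks !sfx.
    case: (ltnP j 6) => hj5.
      case: j h2 hj5 hj2 => [|[|[|[|[|[|j]]]]]] // _ _ hj2; rewrite !Mn_blocks /= /Mn /=;
        repeat (let h := fresh "h" in case: ifP => h); rewrite ?gv0 ?gv1; lia.
    rewrite !(Mn_ge hp hal) //; last lia.
    rewrite !Mn_blocks /=.
    have e1 : (4 * t + 6 == j) = false by lia.
    rewrite e1 (_ : (6 <= j) && (j < 6 + 4 * t) = true); last lia.
    case: (ltnP j.+2 (6 + 4 * t)) => hj2'.
      rewrite andbT ifT; last lia.
      rewrite (_ : j.+2 - 6 = (j - 6).+2); last lia.
      have := gv_S2 (j - 6); lia.
    rewrite andbF (_ : (4 * t + 6 == j.+2) = true); last lia.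
    have := gv_ne2 (j - 6); lia.
- exists u0, s'; rewrite hs !size_cat size_blocks /=; split => //; lia.
Qed.


Lemma fam0 n t : n = 4 * t + 4 ->
  exists u0 s, irregularising (cycle_rel n) u0 s /\ size s = 2 * n - 6.
Proof.
move=> hn.
have hp : path nadj 2 [:: 3; 4] by [].
have hal : all (fun x => x <= 4) [:: 2; 3; 4] by [].
have [|||| u0 [s' [hi hs]]] := @upper_nat n 2 ([:: 3; 4] ++ blocks 4 t).
- lia.
- by rewrite cat_path /= path_blocks.
- rewrite -cat_cons all_cat all_blocks /=; lia.
- apply: check_abc; first lia.
  + by move=> [|[|]] // _; rewrite Mn_cat Mn_blocks.
  + move=> j /andP [h2 hjn]; case: (ltnP j 4) => hj5.
      case: j h2 hj5 {hjn} => [|[|[|[|j]]]] // _ _; by rewrite Mn_cat Mn_blocks.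
    rewrite Mn_cat (Mn_ge hp hal) // Mn_blocks; case: ifP => /= h; [exact: gv_pos | lia].
  + move=> j h2 hj2; case: (ltnP j 4) => hj5.
      case: j h2 hj5 hj2 => [|[|[|[|j]]]] // _ _ hj2; rewrite !Mn_cat !Mn_blocks /= /Mn /=;
        repeat (let h := fresh "h" in case: ifP => h); rewrite /gv; lia.
    rewrite !Mn_cat !(Mn_ge hp hal) //.
    rewrite !Mn_blocks /= !ifT; [|lia|lia].
    have -> : j.+2 - 4 = (j - 4).+2 by lia.
    by rewrite /= !add0n gv_S2.
- exists u0, s'; rewrite hs size_cat size_blocks /=; split => //; lia.
Qed.



Lemma fam_3 : exists u0 s, irregularising (cycle_rel 3) u0 s /\ size s = 3.
Proof.
have [|||| u0 [s' [hi hs]]] := @upper_nat 3 1 [:: 2; 3; 2].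
- by [].
- by [].
- by [].
- by move=> [|[|[|]]].
- by exists u0, s'; rewrite hs.
Qed.

Unset Implicit Arguments.

Theorem corollary5p6 (n : nat) : 3 <= n ->
  MLW_is (cycle_rel n) (if n == 3 then 3 else (2 * n - 6)%N).
Proof.
move=> hn; case: eqP => [->|h3].
  split; first by have [u0 [s [hi hs]]] := fam_3; exists u0, s.
  by move=> u0 s hi; exact: lower3 hi.
have hn4 : 4 <= n by lia.
split; last by move=> u0 s hi; apply: lower_bound hi; lia.
have [t [r [hr hnr]]] : exists t r, r < 4 /\ n = 4 * t + 4 + r.
  by exists ((n - 4) %/ 4), ((n - 4) %% 4); split; lia.
case: r hr hnr => [|[|[|[|r]]]] // _ hnr.
- have [u0 [s [hi hs]]] := @fam0 n t ltac:(lia). by exists u0, s.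
- have [u0 [s [hi hs]]] := @fam1 n t ltac:(lia). by exists u0, s.
- have [u0 [s [hi hs]]] := @fam2 n t ltac:(lia). by exists u0, s.
- have [u0 [s [hi hs]]] := @fam3 n t ltac:(lia). by exists u0, s.
Qed.
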